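(* Let $\varepsilon\in(0,1]$, $L\in[0,\infty)$, $q\in(1,\infty)$, let $f\colon\mathbb R\to\mathbb R$ satisfy $|f(x)-f(y)|\le L|x-y|$ for all $x,y\in\mathbb R$, and let $a\in C(\mathbb R,\mathbb R)$ satisfy $a(x)=\ln(1+\exp(x))$ for all $x\in\mathbb R$. Then there exists $\mathbf G\in\mathbf N$ such that (i) $\mathcal R_a(\mathbf G)\in C(\mathbb R,\mathbb R)$; (ii) $\mathcal H(\mathbf G)=1$; (iii) $|(\mathcal R_a(\mathbf G))(x)-(\mathcal R_a(\mathbf G))(y)|\le L|x-y|$ for all $x,y\in\mathbb R$; (iv) $|(\mathcal R_a(\mathbf G))(x)-f(x)|\le2\varepsilon\max\{1,|x|^q\}$ for all $x\in\mathbb R$; (v) $\mathbb D_1(\mathbf G)\le2(\max\{1,2L\})^{q/(q-1)}\varepsilon^{-q/(q-1)}+1$; and (vi) $\mathcal P(\mathbf G)=3\mathbb D_1(\mathbf G)+1\le12(\max\{1,2L\})^{q/(q-1)}\varepsilon^{-q/(q-1)}$.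
   Context: Artificial neural networks (ANNs). Let $\mathbb N=\{1,2,\dots\}$ and $\mathbf N=\bigcup_{L\in\mathbb N}\bigcup_{l_0,\dots,l_L\in\mathbb N}\prod_{k=1}^L(\mathbb R^{l_k\times l_{k-1}}\times\mathbb R^{l_k})$. For $\Phi=((W_1,B_1),\dots,(W_L,B_L))$ in the $(l_0,\dots,l_L)$ component, $\mathcal P(\Phi)=\sum_{k=1}^Ll_k(l_{k-1}+1)$, $\mathcal H(\Phi)=L-1$, $\mathbb D_1(\Phi)=l_1$. For $a\in C(\mathbb R,\mathbb R)$ the realization $\mathcal R_a(\Phi)\colon\mathbb R^{l_0}\to\mathbb R^{l_L}$ is $(\mathcal R_a(\Phi))(x_0)=W_Lx_{L-1}+B_L$ with $x_k=\mathfrak M_{a,l_k}(W_kx_{k-1}+B_k)$, $k=1,\dots,L-1$, where $\mathfrak M_{a,m}$ applies $a$ componentwise. *)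

(* Defs.v *)
From HB Require Import structures.
From mathcomp Require Import all_boot all_order all_algebra.
From mathcomp Require Import all_classical all_reals all_analysis.
Set Implicit Arguments. Unset Strict Implicit. Unset Printing Implicit Defensive.
Import Order.TTheory GRing.Theory Num.Theory.
Local Open Scope ring_scope.

(* A value of [net R l0 lL] is a tuple
   ((W_1,B_1),...,(W_L,B_L)) with W_k : 'M_(l_k, l_{k-1}), B_k : 'cV_(l_k),
   input dimension l0 and output dimension lL.  [Affine] is the last layer,
   [Layer W B rest] prepends a (hidden-producing) layer. *)
Inductive net (R : realType) : nat -> nat -> Type :=
| Affine (m n : nat) (W : 'M[R]_(n, m)) (B : 'cV[R]_n) : net R m n
| Layer (m n k : nat) (W : 'M[R]_(n, m)) (B : 'cV[R]_n) (rest : net R n k) : net R m k.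

Fixpoint realization (R : realType) (a : R -> R) (m k : nat) (G : net R m k)
  : 'cV[R]_m -> 'cV[R]_k :=
  match G in net _ m k return 'cV[R]_m -> 'cV[R]_k with
  | Affine _ _ W B => fun x => W *m x + B
  | Layer _ _ _ W B rest => fun x => realization a rest (map_mx a (W *m x + B))
  end.

Fixpoint nparams (R : realType) (m k : nat) (G : net R m k) : nat :=
  match G with
  | Affine m n _ _ => (n * (m + 1))%N
  | Layer m n _ _ _ rest => (n * (m + 1) + nparams rest)%N
  end.

Fixpoint nhidden (R : realType) (m k : nat) (G : net R m k) : nat :=
  match G with
  | Affine _ _ _ _ => 0%N
  | Layer _ _ _ _ _ rest => (nhidden rest).+1
  end.

Definition dim1 (R : realType) (m k : nat) (G : net R m k) : nat :=
  match G with
  | Affine _ n _ _ => n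
  | Layer _ n _ _ _ _ => n
  end.

Definition realization11 (R : realType) (a : R -> R) (G : net R 1 1) (x : R) : R :=
  realization a G (const_mx x) ord0 ord0.

(* Main.v *)
Require Import Defs.
From HB Require Import structures.
From mathcomp Require Import all_boot all_order all_algebra.
From mathcomp Require Import all_classical all_reals all_analysis.
From mathcomp Require Import ring lra.
Import Order.TTheory GRing.Theory Num.Theory numFieldNormedType.Exports.
Set Implicit Arguments. Unset Strict Implicit.
Local Open Scope ring_scope.

Definition sp (R : realType) (x : R) := ln (1 + expR x).

Lemma ln_le_lemma (R : realType) (y z : R) : 0 < y -> y <= expR z -> ln y <= z.
Proof.
move=> y0 yz; rewrite -[z in _ <= z]expRK ler_ln ?posrE ?expR_gt0 //.
Qed.

Lemma ln_ge_lemma (R : realType) (y z : R) : 0 < y -> expR z <= y -> z <= ln y.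
Proof.
move=> y0 yz; rewrite -[z in z <= _]expRK ler_ln ?posrE ?expR_gt0 //.
Qed.

Lemma sp_relu (R : realType) (x : R) :
  0 <= sp x - Num.max x 0 <= 1.
Proof.
rewrite /sp subr_ge0 lerBlDl; apply/andP; split.
  apply: ln_ge_lemma; first by rewrite ltr_wpDr ?expR_ge0.
  case: (leP x 0) => h; first by rewrite expR0 lerDl expR_ge0.
  by rewrite lerDr.
apply: ln_le_lemma; first by rewrite ltr_wpDr ?expR_ge0.
rewrite expRD.
have e2 : 2 <= expR (1:R) by have := expR_ge1Dx (1:R); rewrite (_ : 1 + 1 = 2).
have h1 : expR x <= expR (Num.max x 0) by rewrite ler_expR le_max lexx.
have h2 : 1 <= expR (Num.max x 0) by rewrite -expR0 ler_expR le_max lexx orbT.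
have h3 := expR_ge0 x.
nra.
Qed.

Lemma sp_mono (R : realType) (x y : R) : x <= y -> sp x <= sp y.
Proof.
move=> xy; rewrite /sp ler_ln ?posrE ?ltr_wpDr ?expR_ge0 //.
by rewrite lerD2l ler_expR.
Qed.

Lemma sp_lip (R : realType) (x y : R) : x <= y -> sp y - sp x <= y - x.
Proof.
move=> xy; rewrite lerBlDr /sp -[y - x]expRK -lnM ?posrE ?expR_gt0 ?ltr_wpDr ?expR_ge0 //.
rewrite ler_ln ?posrE ?mulr_gt0 ?expR_gt0 ?ltr_wpDr ?expR_ge0 //.
rewrite mulrDr mulr1 -expRD subrK.
have : 1 <= expR (y - x) by rewrite -expR0 ler_expR subr_ge0.
have := expR_ge0 y. nra.
Qed.

Lemma sp_conv (R : realType) (u v c : R) : u <= v -> 0 <= c ->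
  sp u - sp (u - c) <= sp v - sp (v - c).
Proof.
move=> uv c0.
rewrite lerBlDr addrAC lerBrDr /sp -!lnM ?posrE ?ltr_wpDr ?expR_ge0 //.
rewrite ler_ln ?posrE ?mulr_gt0 ?ltr_wpDr ?expR_ge0 //.
rewrite !expRD.
have U := expR_ge0 u.
have UV : expR u <= expR v by rewrite ler_expR.
have C1 : expR (- c) <= 1 by rewrite -expR0 ler_expR oppr_le0.
have C0 := expR_ge0 (- c).
nra.
Qed.
Lemma lip_cont (R : realType) (g : R -> R) (L : R) : 0 <= L ->
  (forall x y, `|g x - g y| <= L * `|x - y|) -> continuous g.
Proof.
move=> L0 H x; apply/cvgrPdist_lt => e e0.
have L1 : 0 < L + 1 by lra.
have ee : 0 < e / (L + 1) by rewrite divr_gt0.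
near=> y.
apply: (le_lt_trans (H x y)).
have hy : `|x - y| < e / (L + 1).
  near: y; apply: cvgr_dist_lt => //.
rewrite ltr_pdivlMr // in hy.
have := normr_ge0 (x - y).
nra.
Unshelve. all: end_near.
Qed.
Definition xg (R : realType) (x0 δ : R) (i : nat) := x0 + i%:R * δ.
Definition dd (R : realType) (f : R -> R) (x0 δ : R) (i : nat) :=
  (f (xg x0 δ i.+1) - f (xg x0 δ i)) / δ.
Definition cc (R : realType) (f : R -> R) (x0 δ : R) (N j : nat) :=
  (if (j < N)%N then dd f x0 δ j else 0) - (if j is j'.+1 then dd f x0 δ j' else 0).
Definition phi (R : realType) (k t : R) := sp (k * t) / k.
Definition hh (R : realType) (f : R -> R) (x0 δ : R) (N : nat) (k x : R) :=
  f x0 + \sum_(i < N) dd f x0 δ i * (phi k (x - xg x0 δ i) - phi k (x - xg x0 δ i.+1)).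

Definition GG (R : realType) (f : R -> R) (x0 δ : R) (N : nat) (k : R) : net R 1 1 :=
  Layer (const_mx k : 'M[R]_(N.+1, 1)) (\col_(j < N.+1) (- (k * xg x0 δ j)))
    (Affine (\row_(j < N.+1) (cc f x0 δ N j / k)) (const_mx (f x0))).

Lemma GG_real (R : realType) (f a : R -> R) (x0 δ : R) (N : nat) (k : R) x :
  (forall x, a x = ln (1 + expR x)) -> k != 0 ->
  realization11 a (GG f x0 δ N k) x = hh f x0 δ N k x.
Proof.
move=> ha k0.
rewrite /realization11 /GG /= !mxE /hh addrC; congr (_ + _).
transitivity (\sum_(j < N.+1) cc f x0 δ N j * phi k (x - xg x0 δ j)).
  apply: eq_bigr => j _; rewrite !mxE big_ord1 !mxE ha /phi /sp.
  by rewrite mulrBr mulrA mulrAC.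
rewrite /cc.
under eq_bigr => j _ do rewrite mulrBl.
rewrite sumrB big_ord_recr big_ord_recl /= ltnn mul0r addr0 mul0r add0r.
rewrite -sumrB; apply: eq_bigr => i _.
by rewrite ltn_ord mulrBr.
Qed.

Section Phi.
Variables (R : realType) (k : R).
Hypothesis k0 : 0 < k.

Lemma phi_mono s t : s <= t -> phi k s <= phi k t.
Proof. by move=> st; rewrite /phi ler_pM2r ?invr_gt0 // sp_mono // ler_pM2l. Qed.

Lemma phi_lip s t : s <= t -> phi k t - phi k s <= t - s.
Proof.
move=> st; rewrite /phi -mulrBl ler_pdivrMr //.
rewrite (le_trans (sp_lip _)) ?ler_pM2l //.
by rewrite mulrBl [t * k]mulrC [s * k]mulrC.
Qed.

Lemma phi_conv s t c : s <= t -> 0 <= c ->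
  phi k s - phi k (s - c) <= phi k t - phi k (t - c).
Proof.
move=> st c0; rewrite /phi -!mulrBl ler_pM2r ?invr_gt0 //.
rewrite !mulrBr; apply: sp_conv; first by rewrite ler_pM2l.
by rewrite mulr_ge0 // ltW.
Qed.

Lemma phi_relu t : `|phi k t - Num.max t 0| <= k^-1.
Proof.
have := sp_relu (k * t).
have -> : Num.max (k * t) 0 = k * Num.max t 0.
  by rewrite maxr_pMr ?ltW // mulr0.
move=> /andP[h1 h2].
have e : phi k t - Num.max t 0 = (sp (k * t) - k * Num.max t 0) / k.
  by rewrite /phi mulrBl mulrAC divff ?gt_eqF // mul1r.
rewrite e ger0_norm; last by rewrite divr_ge0 // ltW.
by rewrite -[X in _ <= X]mul1r ler_pM2r ?invr_gt0.
Qed.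
End Phi.

Lemma xgS (R : realType) (x0 δ : R) i : xg x0 δ i.+1 = xg x0 δ i + δ.
Proof. by rewrite /xg -addn1 natrD mulrDl mul1r addrA. Qed.

Lemma xg_mono (R : realType) (x0 δ : R) i j : 0 <= δ -> (i <= j)%N -> xg x0 δ i <= xg x0 δ j.
Proof. by move=> d0 ij; rewrite /xg lerD2l ler_wpM2r // ler_nat. Qed.

Lemma xg0 (R : realType) (x0 δ : R) : xg x0 δ 0 = x0.
Proof. by rewrite /xg mul0r addr0. Qed.

Lemma dd_bound (R : realType) (f : R -> R) (L x0 δ : R) i : 0 < δ ->
  (forall x y : R, `|f x - f y| <= L * `|x - y|) -> `|dd f x0 δ i| <= L.
Proof.
move=> d0 hf; rewrite /dd normrM normfV (gtr0_norm d0) ler_pdivrMr //.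
have e : xg x0 δ i.+1 - xg x0 δ i = δ by rewrite xgS addrAC subrr add0r.
by have := hf (xg x0 δ i.+1) (xg x0 δ i); rewrite e (gtr0_norm d0).
Qed.

Lemma dd_mul (R : realType) (f : R -> R) (x0 δ : R) i : 0 < δ ->
  dd f x0 δ i * δ = f (xg x0 δ i.+1) - f (xg x0 δ i).
Proof. by move=> d0; rewrite /dd mulfVK ?gt_eqF. Qed.

Lemma sum_tele (R : realType) (u : nat -> R) N :
  \sum_(i < N) (u i - u i.+1) = u 0%N - u N.
Proof.
rewrite -(big_mkord xpredT (fun i => u i - u i.+1)).
have := @telescope_sumr _ 0%N N u (leq0n N).
move=> H; rewrite -opprB -H -sumrN; apply: eq_bigr => i _; by rewrite opprB.
Qed.

Lemma hh_lip (R : realType) (f : R -> R) (L x0 δ : R) (N : nat) (k : R) :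
  0 < δ -> 0 < k -> 0 <= L ->
  (forall x y : R, `|f x - f y| <= L * `|x - y|) ->
  forall x y, `|hh f x0 δ N k x - hh f x0 δ N k y| <= L * `|x - y|.
Proof.
move=> d0 k0 L0 hf.
suff H : forall x y, y <= x -> `|hh f x0 δ N k x - hh f x0 δ N k y| <= L * `|x - y|.
  move=> x y; case: (leP y x) => xy; first exact: H.
  by rewrite distrC [`|x - y|]distrC; apply: H; rewrite ltW.
move=> x y yx.
pose g i t := phi k (t - xg x0 δ i) - phi k (t - xg x0 δ i.+1).
have gE : forall i t, g i t = phi k (t - xg x0 δ i) - phi k ((t - xg x0 δ i) - δ).
  by move=> i t; rewrite /g xgS [- (_ + δ)]opprD addrA.
have gm : forall i, 0 <= g i x - g i y.
  move=> i; rewrite subr_ge0 !gE.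
  apply: phi_conv => //; last exact: ltW.
  by have h : y - xg x0 δ i <= x - xg x0 δ i by rewrite lerD2r.
have -> : hh f x0 δ N k x - hh f x0 δ N k y = \sum_(i < N) dd f x0 δ i * (g i x - g i y).
  rewrite /hh opprD addrACA subrr add0r -sumrB; apply: eq_bigr => i _.
  by rewrite -mulrBr.
have sg : \sum_(i < N) (g i x - g i y) =
   (phi k (x - x0) - phi k (y - x0)) - (phi k (x - xg x0 δ N) - phi k (y - xg x0 δ N)).
  pose u i := phi k (x - xg x0 δ i) - phi k (y - xg x0 δ i).
  rewrite (eq_bigr (fun i : 'I_N => u i - u i.+1)); last by move=> i _; rewrite /g /u; ring.
  by rewrite sum_tele /u xg0.
apply: (le_trans (ler_norm_sum _ _ _)).
apply: (@le_trans _ _ (\sum_(i < N) L * (g i x - g i y))).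
  apply: ler_sum => i _; rewrite normrM (ger0_norm (gm i)).
  by rewrite ler_wpM2r // dd_bound.
rewrite -mulr_sumr sg ler_wpM2l // ger0_norm; last by rewrite subr_ge0.
have h1 : phi k (x - x0) - phi k (y - x0) <= x - x0 - (y - x0).
  by apply: phi_lip => //; rewrite lerD2r.
have h2 : phi k (y - xg x0 δ N) <= phi k (x - xg x0 δ N).
  by apply: phi_mono => //; rewrite lerD2r.
rewrite (_ : x - x0 - (y - x0) = x - y) in h1; last by ring.
lra.
Qed.

Definition rl (R : realType) (t : R) := Num.max t 0.
Definition h0 (R : realType) (f : R -> R) (x0 δ : R) (N : nat) (x : R) :=
  f x0 + \sum_(i < N) dd f x0 δ i * (rl (x - xg x0 δ i) - rl (x - xg x0 δ i.+1)).

Section Approx.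
Variables (R : realType) (f : R -> R) (L x0 δ : R) (N : nat) (k : R).
Hypotheses (d0 : 0 < δ) (k0 : 0 < k) (L0 : 0 <= L)
  (hf : forall x y : R, `|f x - f y| <= L * `|x - y|).

Let F x i := dd f x0 δ i * (rl (x - xg x0 δ i) - rl (x - xg x0 δ i.+1)).

Lemma rl_pos (t : R) : 0 <= t -> rl t = t.
Proof. by move=> t0; rewrite /rl max_l. Qed.
Lemma rl_neg (t : R) : t <= 0 -> rl t = 0.
Proof. by move=> t0; rewrite /rl max_r. Qed.

Lemma sum_before j x : xg x0 δ j <= x -> \sum_(0 <= i < j) F x i = f (xg x0 δ j) - f x0.
Proof.
move=> hx; rewrite -[X in _ - f X](xg0 x0 δ).
apply: (@telescope_sumr_eq _ 0%N j (fun i => f (xg x0 δ i))) => // i /andP[_ ij].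
have hi : xg x0 δ i.+1 <= x by apply: le_trans hx; apply: xg_mono => //; exact: ltW.
rewrite /F !rl_pos ?subr_ge0 //; last by rewrite (le_trans _ hi) // xgS lerDl ltW.
rewrite -dd_mul //; congr (_ * _); rewrite xgS; ring.
Qed.

Lemma h0_left x : x <= x0 -> h0 f x0 δ N x = f x0.
Proof.
move=> hx; rewrite /h0 big1 ?addr0 // => i _.
rewrite !rl_neg ?subrr ?mulr0 // subr_le0 (le_trans hx) //; rewrite -{1}(xg0 x0 δ); exact: xg_mono (ltW d0) _.
Qed.

Lemma h0_right x : xg x0 δ N <= x -> h0 f x0 δ N x = f (xg x0 δ N).
Proof.
move=> hx; rewrite /h0 -(big_mkord xpredT (F x)) sum_before //.
by rewrite addrC subrK.
Qed.

Lemma h0_val j x : (j < N)%N -> xg x0 δ j <= x <= xg x0 δ j.+1 ->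
  h0 f x0 δ N x = f (xg x0 δ j) + dd f x0 δ j * (x - xg x0 δ j).
Proof.
move=> jN /andP[h1 h2]; rewrite /h0 -(big_mkord xpredT (F x)).
rewrite (big_cat_nat _ (n := j)) //=; last exact: ltnW.
rewrite sum_before // big_ltn //.
rewrite (@eq_big_nat _ _ _ j.+1 N _ (fun _ => 0)); last first.
  move=> i /andP[ji _].
  have hi : xg x0 δ j.+1 <= xg x0 δ i by apply: xg_mono => //; exact: ltW.
  rewrite /F !rl_neg ?subrr ?mulr0 // subr_le0 (le_trans h2) //.
  by rewrite (le_trans hi) // xgS lerDl ltW.
rewrite big1_eq addr0 /F (rl_pos (t := x - _)) ?subr_ge0 // rl_neg ?subr_le0 //.
by rewrite subr0; ring.
Qed.

Lemma hh_h0 x : `|hh f x0 δ N k x - h0 f x0 δ N x| <= N%:R * (L * (2 / k)).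
Proof.
rewrite /hh /h0 opprD addrACA subrr add0r -sumrB.
apply: (le_trans (ler_norm_sum _ _ _)).
apply: (@le_trans _ _ (\sum_(i < N) (L * (2 / k)))); last first.
  by rewrite sumr_const card_ord (mulr_natl (L * (2 / k)) N).
apply: ler_sum => i _; rewrite -mulrBr normrM ler_pM ?dd_bound //.
set a := x - xg x0 δ i; set b := x - xg x0 δ i.+1.
have := phi_relu k0 a; have := phi_relu k0 b; rewrite /rl.
move=> ha hb.
rewrite (_ : phi k a - phi k b - (Num.max a 0 - Num.max b 0) =
            (phi k a - Num.max a 0) - (phi k b - Num.max b 0)); last by ring.
apply: (le_trans (ler_normB _ _)).
by rewrite mulrDl mul1r lerD.
Qed.
End Approx.

Section Bounds.
Variables (R : realType) (f : R -> R) (L x0 δ : R) (N : nat).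
Hypotheses (d0 : 0 < δ) (L0 : 0 <= L)
  (hf : forall x y : R, `|f x - f y| <= L * `|x - y|).

Lemma h0_left_bd x : x <= x0 -> `|h0 f x0 δ N x - f x| <= L * (x0 - x).
Proof.
move=> hx; rewrite h0_left //; have := hf x0 x.
by rewrite (ger0_norm (x := x0 - x)) // subr_ge0.
Qed.

Lemma h0_right_bd x : xg x0 δ N <= x -> `|h0 f x0 δ N x - f x| <= L * (x - xg x0 δ N).
Proof.
move=> hx; rewrite h0_right //; have := hf (xg x0 δ N) x.
by rewrite distrC [`|xg x0 δ N - x|]distrC (ger0_norm (x := x - _)) // subr_ge0.
Qed.

Lemma h0_inside_bd x : x0 <= x <= xg x0 δ N -> `|h0 f x0 δ N x - f x| <= L * δ.
Proof.
move=> /andP[h1 h2].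
case: (ltP x (xg x0 δ N)) => hxN; last first.
  have -> : x = xg x0 δ N by apply/eqP; rewrite eq_le h2 hxN.
  by rewrite h0_right // subrr normr0 mulr_ge0 // ltW.
set j := Num.truncn ((x - x0) / δ).
have t0 : 0 <= (x - x0) / δ by rewrite divr_ge0 ?subr_ge0 // ltW.
have /andP[tj1 tj2] := truncn_itv t0.
rewrite -/j in tj1 tj2.
have hj1 : xg x0 δ j <= x by rewrite /xg -lerBrDl -ler_pdivlMr.
have hj2 : x <= xg x0 δ j.+1 by rewrite /xg -lerBlDl -ler_pdivrMr // ltW.
have jN : (j < N)%N.
  rewrite -(ltr_nat R); apply: (le_lt_trans tj1); rewrite ltr_pdivrMr //.
  move: hxN; rewrite /xg; lra.
rewrite (h0_val f d0 jN); last by rewrite hj1 hj2.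
set t := x - xg x0 δ j.
have t0' : 0 <= t by rewrite subr_ge0.
have t1 : t <= δ by rewrite /t lerBlDl -xgS.
have hA : `|f (xg x0 δ j) - f x| <= L * t by rewrite distrC -/t (le_trans (hf _ _)) // ger0_norm.
have hB : `|f (xg x0 δ j.+1) - f x| <= L * (δ - t).
  rewrite (le_trans (hf _ _)) // ler_wpM2l // ger0_norm ?subr_ge0 // /t xgS; lra.
set lam := t / δ.
have l0 : 0 <= lam by rewrite divr_ge0 // ltW.
have l1 : lam <= 1 by rewrite ler_pdivrMr // mul1r.
have -> : f (xg x0 δ j) + dd f x0 δ j * t - f x =
   (1 - lam) * (f (xg x0 δ j) - f x) + lam * (f (xg x0 δ j.+1) - f x).
  rewrite /lam /dd; field; by rewrite gt_eqF.
apply: (le_trans (ler_normD _ _)).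
have n1 : `|(1 - lam) * (f (xg x0 δ j) - f x)| = (1 - lam) * `|f (xg x0 δ j) - f x|.
  by rewrite normrM (ger0_norm (x := 1 - lam)) // subr_ge0.
have n2 : `|lam * (f (xg x0 δ j.+1) - f x)| = lam * `|f (xg x0 δ j.+1) - f x|.
  by rewrite normrM (ger0_norm l0).
rewrite n1 n2.
have tl : t = lam * δ by rewrite /lam mulfVK // gt_eqF.
rewrite tl in hA hB.
have a1 : (1 - lam) * `|f (xg x0 δ j) - f x| <= (1 - lam) * (L * (lam * δ)).
  by rewrite ler_wpM2l // subr_ge0.
have a2 : lam * `|f (xg x0 δ j.+1) - f x| <= lam * (L * (δ - lam * δ)) by rewrite ler_wpM2l.
have : (1 - lam) * (L * (lam * δ)) + lam * (L * (δ - lam * δ)) <= L * δ.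
  have e : (1 - lam) * (L * (lam * δ)) + lam * (L * (δ - lam * δ)) = L * δ * (2 * lam * (1 - lam)) by ring.
  rewrite e ler_piMr ?mulr_ge0 // ?ltW //; nra.
lra.
Qed.
End Bounds.

Theorem mainTheorem18 (R : realType) (eps L q : R) (f a : R -> R)
  (heps0 : 0 < eps) (heps1 : eps <= 1) (hL : 0 <= L) (hq : 1 < q)
  (hf : forall x y : R, `|f x - f y| <= L * `|x - y|)
  (ha_cont : continuous a)
  (ha : forall x : R, a x = ln (1 + expR x)) :
  exists G : net R 1 1,
    continuous (realization11 a G) /\
        nhidden G = 1%N /\
        (forall x y : R,
            `|realization11 a G x - realization11 a G y| <= L * `|x - y|) /\
        (forall x : R,
            `|realization11 a G x - f x| <= 2 * eps * Num.max 1 (`|x| `^ q)) /\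
        ((dim1 G)%:R <= 2 * (Num.max 1 (2 * L)) `^ (q / (q - 1))
                         * eps `^ (- (q / (q - 1))) + 1) /\
        (nparams G = 3 * dim1 G + 1)%N /\
        ((nparams G)%:R <= 12 * (Num.max 1 (2 * L)) `^ (q / (q - 1))
                             * eps `^ (- (q / (q - 1)))).
Proof.
set M := Num.max 1 (2 * L).
set p := q / (q - 1).
set A := M / eps.
set Rr := A `^ (1 / (q - 1)).
have q1 : 0 < q - 1 by rewrite subr_gt0.
have M1 : 1 <= M by rewrite le_max lexx.
have M2 : 2 * L <= M by rewrite le_max lexx orbT.
have A1 : 1 <= A by rewrite /A ler_pdivlMr // mul1r (le_trans heps1).
have A0 : 0 < A by apply: lt_le_trans A1.
have Rr1 : 1 <= Rr.
  rewrite /Rr -[X in X <= _](powRr0 A); apply: ler_powR => //.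
  by apply: divr_ge0 => //; exact: ltW.
set RA := Rr * A.
have RA1 : 1 <= RA by rewrite /RA -(mulr1 1) ler_pM.
have ApE : A `^ p = RA.
  have -> : p = 1 / (q - 1) + 1.
    by rewrite /p; field; rewrite (gt_eqF q1).
  rewrite powRD; last by rewrite (gt_eqF A0) implybT.
  rewrite powRr1 //; exact: ltW.
have MpE : M `^ p * eps `^ (- p) = RA.
  rewrite powRN -ApE.
  have -> : M = A * eps by rewrite /A mulfVK // gt_eqF.
  rewrite powRM ?ltW // mulfK // gt_eqF // powR_gt0 //.
set N := (Num.truncn RA).+1.
have NRA : RA < N%:R by rewrite /N real_truncnS_gt // num_real.
have NRA2 : N%:R <= RA + 1.
  by rewrite /N -addn1 natrD lerD2r truncn_le (le_trans _ RA1).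
have N0 : 0 < N%:R :> R by rewrite ltr0n.
set δ := 2 * Rr / N%:R.
have d0 : 0 < δ by rewrite /δ divr_gt0 // mulr_gt0 // (lt_le_trans ltr01 Rr1).
have dA : δ * A <= 2.
  rewrite /δ mulrAC ler_pdivrMr // -mulrA ler_pM2l //; exact: ltW.
have Ld : L * δ <= eps.
  have : L * δ * A <= eps * A.
    have -> : eps * A = M by rewrite /A mulrC mulfVK // gt_eqF.
    rewrite -mulrA (le_trans _ M2) // mulrC ler_wpM2r //.
  by rewrite ler_pM2r.
set x0 := - Rr.
have xN : xg x0 δ N = Rr.
  by rewrite /xg /δ /x0 mulrC mulfVK ?gt_eqF //; ring.
set k := 2 * N%:R * (L + 1) / eps.
have k0 : 0 < k by rewrite /k divr_gt0 // !mulr_gt0 //; lra.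
have kE : N%:R * (L * (2 / k)) <= eps.
  have -> : N%:R * (L * (2 / k)) = L * eps / (L + 1).
    rewrite /k; field; rewrite ?gt_eqF //; lra.
  rewrite ler_pdivrMr; last lra.
  nra.
have hr : forall x, realization11 a (GG f x0 δ N k) x = hh f x0 δ N k x.
  by move=> x; apply: GG_real => //; rewrite gt_eqF.
have hlip : forall x y, `|realization11 a (GG f x0 δ N k) x - realization11 a (GG f x0 δ N k) y| <= L * `|x - y|.
  by move=> x y; rewrite !hr; apply: hh_lip.
have outs : forall x : R, Rr <= `|x| -> L * `|x| <= eps * `|x| `^ q.
  move=> x hx.
  have x0' : 0 < `|x| by apply: lt_le_trans hx; apply: lt_le_trans Rr1.
  have -> : `|x| `^ q = `|x| `^ (q - 1) * `|x|.
    rewrite -{3}(powRr1 (ltW x0')) -powRD ?subrK //.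
    by rewrite (gt_eqF x0') implybT.
  have hA : A <= `|x| `^ (q - 1).
    have -> : A = Rr `^ (q - 1).
      rewrite /Rr -powRrM (_ : 1 / (q - 1) * (q - 1) = 1).
        by rewrite powRr1 //; exact: ltW.
      by rewrite mul1r mulVf // gt_eqF.
    apply: ge0_ler_powR => //; first exact: ltW.
    by rewrite nnegrE; apply: le_trans Rr1.
  have eA : eps * A = M by rewrite /A mulrC mulfVK // gt_eqF.
  have : M * `|x| <= eps * (`|x| `^ (q - 1) * `|x|).
    by rewrite mulrA ler_pM2r // -eA ler_pM2l.
  have := normr_ge0 x; nra.
exists (GG f x0 δ N k).
split; first exact: (lip_cont hL hlip).
split; first by [].
split; first exact: hlip.
split.
  move=> x; rewrite hr.
  have e1 := hh_h0 x0 N d0 k0 hf x.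
  have mx1 : 1 <= Num.max 1 (`|x| `^ q) by rewrite le_max lexx.
  have mx2 : `|x| `^ q <= Num.max 1 (`|x| `^ q) by rewrite le_max lexx orbT.
  have tri : `|hh f x0 δ N k x - f x| <= `|hh f x0 δ N k x - h0 f x0 δ N x| + `|h0 f x0 δ N x - f x|.
    by rewrite (le_trans _ (ler_normD _ _)) // addrA subrK.
  case: (leP x x0) => hx1.
    have e2 := h0_left_bd N d0 hf hx1.
    have hx : Rr <= `|x| by rewrite ler0_norm; [rewrite /x0 in hx1; lra | rewrite /x0 in hx1; lra].
    have := outs x hx.
    have : L * (x0 - x) <= L * `|x|.
      by rewrite ler_wpM2l // ler0_norm /x0; [lra | rewrite /x0 in hx1; lra].
    nra.
  case: (leP Rr x) => hx2.
    rewrite -xN in hx2.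
    have e2 := h0_right_bd d0 hf hx2.
    rewrite xN in hx2 e2.
    have hx : Rr <= `|x| by rewrite ger0_norm //; lra.
    have := outs x hx.
    have : L * (x - Rr) <= L * `|x|.
      by rewrite ler_wpM2l // ger0_norm; lra.
    nra.
  have e2 : `|h0 f x0 δ N x - f x| <= L * δ.
    by apply: (h0_inside_bd d0 hL hf); rewrite xN (ltW hx1) (ltW hx2).
  nra.
split.
  rewrite /= -mulrA MpE -addn1 natrD lerD2r.
  lra.
have np : nparams (GG f x0 δ N k) = (3 * N.+1 + 1)%N by rewrite /=; ring.
split; first by rewrite np.
rewrite np -mulrA MpE natrD natrM -addn1 natrD.
lra.
Qed.
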